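(* Let $\mathscr T=(V,\mathcal E)$ be the directed Cartesian product of rooted directed trees $\mathscr T_1,\dots,\mathscr T_d$ and let $S_{\boldsymbol\lambda}$ be a commuting multishift on $\mathscr T$. Then $S_{\boldsymbol\lambda}$ is strongly circular.
   Context: Directed trees: no loops or circuits, connected ignoring orientation, unique parent $\mathsf{par}(v)$ for vertices with incoming edges; rooted: unique parentless vertex $\mathsf{root}$; $\mathsf{Chi}(u)=\{v:(u,v)\in\mathcal E\}$; all leafless. Directed Cartesian product of rooted trees $\mathscr T_j=(V_j,\mathcal E_j)$: $V=V_1\times\dots\times V_d$ (countably infinite), $(v,w)\in\mathcal E$ iff for some $k$, $(v_k,w_k)\in\mathcal E_k$ and $w_j=v_j$ ($j\ne k$). $\mathsf{Chi}_j(v)=\{w:w_j\in\mathsf{Chi}(v_j),w_k=v_k\ (k\ne j)\}$; $\mathsf{par}_j(v)$ replaces $v_j\ne\mathsf{root}_j$ by $\mathsf{par}(v_j)$. Multishift with positive weights $\lambda^{(j)}_v$: $(S_jf)(v)=\lambda^{(j)}_vf(\mathsf{par}_j(v))$ if $v_j\neq\mathsf{root}_j$, else $0$; each $S_j$ bounded on $l^2(V)$. A commuting $d$-tuple $T$ on $\mathcal H$ is circular if for every $\theta\in\mathbb R^d$ there is a unitary $\Gamma_\theta$ with $\Gamma_\theta^*T_j\Gamma_\theta=e^{i\theta_j}T_j$ for all $j$; strongly circular if moreover $\Gamma_\theta$ can be chosen so that $\theta\mapsto\Gamma_\theta h$ is continuous on $\mathbb R^d$ for every $h$ and $\theta\mapsto\Gamma_\theta$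 is a unitary representation of $\mathbb R^d$. *)

(* Defs.v *)
From HB Require Import structures.
From mathcomp Require Import all_boot all_order all_algebra.
From mathcomp Require Import all_classical all_reals all_analysis.
From mathcomp Require Import complex.

Set Implicit Arguments.
Unset Strict Implicit.
Unset Printing Implicit Defensive.

Import Order.TTheory GRing.Theory Num.Theory.
Local Open Scope ring_scope.
Local Open Scope classical_set_scope.

Inductive undir_conn (T : Type) (E : T -> T -> Prop) : T -> T -> Prop :=
  | uc_refl x : undir_conn E x x
  | uc_fwd x y z : E x y -> undir_conn E y z -> undir_conn E x z
  | uc_bwd x y z : E y x -> undir_conn E y z -> undir_conn E x z.

Definition has_circuit (T : Type) (E : T -> T -> Prop) : Prop :=
  exists (n : nat) (c : nat -> T),
    (2 <= n)%N /\
    (forall i j, (i < n)%N -> (j < n)%N -> c i = c j -> i = j) /\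
    (forall i, (i.+1 < n)%N -> E (c i) (c i.+1)) /\
    E (c n.-1) (c 0%N).

Definition is_directed_tree (T : Type) (E : T -> T -> Prop) : Prop :=
  [/\ (forall v, ~ E v v),
      ~ has_circuit E,
      (forall u v, undir_conn E u v)
    & (forall u v w, E v u -> E w u -> v = w)].

Definition is_root (T : Type) (E : T -> T -> Prop) (r : T) : Prop :=
  (forall w, ~ E w r) /\ (forall u, (forall w, ~ E w u) -> u = r).

Definition is_rooted_directed_tree (T : Type) (E : T -> T -> Prop) (r : T) :=
  is_directed_tree E /\ is_root E r.

Definition leafless (T : Type) (E : T -> T -> Prop) : Prop :=
  forall u, exists v, E u v.

Definition is_parent_fun (T : Type) (E : T -> T -> Prop) (r : T) (par : T -> T) :=
  forall u, u <> r -> E (par u) u.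

Definition countable_type (T : Type) : Prop :=
  exists f : T -> nat, injective f.

Definition prodV (d : nat) (V : 'I_d -> Type) := forall j : 'I_d, V j.

Definition prod_edge (d : nat) (V : 'I_d -> Type)
    (E : forall j, V j -> V j -> Prop) (v w : prodV V) : Prop :=
  exists k : 'I_d, E k (v k) (w k) /\ (forall j, j <> k -> w j = v j).

Definition par_j (d : nat) (V : 'I_d -> Type) (par : forall j, V j -> V j)
    (j : 'I_d) (v : prodV V) : prodV V :=
  @dfwith _ V v j (par j (v j)).

Section L2.
Variables (R : realType) (X : Type).
Local Notation C := R[i].

(* squared l^2 norm, as an extended real: the (unordered) sum of the
   nonnegative family |f x|^2, i.e. the supremum of its finite partial
   sums (sums over duplicate-free finite lists of points) *)
Definition l2norm2 (f : X -> C) : \bar R :=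
  ereal_sup [set ((\sum_(x <- s) (Normc.normc (f x)) ^+ 2)%:E)%E
            | s in [set s : seq X | forall i j, (i < size s)%N -> (j < size s)%N ->
                       forall x0, nth x0 s i = nth x0 s j -> i = j]].

Definition in_l2 (f : X -> C) : Prop := (l2norm2 f < +oo)%E.

(* a bounded operator on l^2(X) (given as a map on all functions) *)
Definition bounded_on_l2 (A : (X -> C) -> (X -> C)) : Prop :=
  exists M : R, forall f, in_l2 f ->
    in_l2 (A f) /\ (l2norm2 (A f) <= M%:E * l2norm2 f)%E.

Definition linear_on_l2 (A : (X -> C) -> (X -> C)) : Prop :=
  forall (a : C) f g, in_l2 f -> in_l2 g ->
    A (fun x => a * f x + g x) = (fun x => a * A f x + A g x).

(* G is a unitary operator on l^2(X) with inverse (= adjoint) Ginv: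
   a linear isometry of l^2(X) onto itself *)
Definition unitary_on_l2 (G Ginv : (X -> C) -> (X -> C)) : Prop :=
  [/\ linear_on_l2 G,
      forall f, in_l2 f -> in_l2 (G f) /\ in_l2 (Ginv f),
      forall f, in_l2 f -> l2norm2 (G f) = l2norm2 f,
      forall f, in_l2 f -> Ginv (G f) = f
    & forall f, in_l2 f -> G (Ginv f) = f].

End L2.

Definition expi (R : realType) (t : R) : R[i] := Complex (cos t) (sin t).

Definition commuting_tuple (R : realType) (X : Type) (d : nat)
    (T : 'I_d -> (X -> R[i]) -> (X -> R[i])) : Prop :=
  forall j k f, in_l2 f -> T j (T k f) = T k (T j f).

Definition circular_family (R : realType) (X : Type) (d : nat)
    (T : 'I_d -> (X -> R[i]) -> (X -> R[i]))
    (Gamma Gammainv : ('I_d -> R) -> (X -> R[i]) -> (X -> R[i])) : Prop :=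
  forall theta : 'I_d -> R,
    unitary_on_l2 (Gamma theta) (Gammainv theta) /\
    forall j f, in_l2 f ->
      Gammainv theta (T j (Gamma theta f)) = (fun x => expi (theta j) * T j f x).

Definition strongly_circular (R : realType) (X : Type) (d : nat)
    (T : 'I_d -> (X -> R[i]) -> (X -> R[i])) : Prop :=
  exists Gamma Gammainv : ('I_d -> R) -> (X -> R[i]) -> (X -> R[i]),
    [/\ circular_family T Gamma Gammainv,
        (* strong continuity: theta |-> Gamma theta h is continuous R^d -> l^2 *)
        (forall h, in_l2 h -> forall theta0 : 'I_d -> R, forall eps : R, 0 < eps ->
           exists delta : R, 0 < delta /\
             forall theta : 'I_d -> R, (forall j, `|theta j - theta0 j| < delta) ->
               (l2norm2 (fun x => (Gamma theta h x - Gamma theta0 h x)%R) < eps%:E)%E),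
        (forall h, in_l2 h -> Gamma (fun _ => 0) h = h)
      & (forall theta theta' h, in_l2 h ->
           Gamma (fun j => theta j + theta' j) h = Gamma theta (Gamma theta' h))].

Definition multishift (R : realType) (d : nat) (V : 'I_d -> Type)
    (root : forall j, V j) (par : forall j, V j -> V j)
    (lam : 'I_d -> prodV V -> R) (j : 'I_d) (f : prodV V -> R[i]) :
    prodV V -> R[i] :=
  fun v => if `[< v j = root j >] then 0
           else ((lam j v)%:C)%C * f (par_j par j v).

(* Main.v *)
Require Import Defs.
From HB Require Import structures.
From mathcomp Require Import all_boot all_order all_algebra.
From mathcomp Require Import all_classical all_reals all_analysis.
From mathcomp Require Import complex.
From mathcomp Require Import ring lra.
Import Order.TTheory GRing.Theory Num.Theory.
Import numFieldNormedType.Exports.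
Set Implicit Arguments.
Unset Strict Implicit.
Local Open Scope ring_scope.

Section Cx.
Variable R : realType.
Local Notation C := R[i].

Definition ns (z : C) : R := (Normc.normc z) ^+ 2.

Lemma nsE a b : ns (Complex a b) = a ^+ 2 + b ^+ 2.
Proof. by rewrite /ns /= sqr_sqrtr // addr_ge0 ?sqr_ge0. Qed.

Lemma ns_ge0 z : 0 <= ns z. Proof. exact: sqr_ge0. Qed.

Lemma nsM z w : ns (z * w) = ns z * ns w.
Proof. by rewrite /ns Normc.normcM exprMn. Qed.

Lemma ns_expi (t : R) : ns (expi t) = 1.
Proof. by rewrite /expi nsE cos2Dsin2. Qed.

Lemma nsB z w : ns (z - w) <= 2 * (ns z + ns w).
Proof.
case: z w => a b [c e]; rewrite /= !nsE.
have := sqr_ge0 (a + c); have := sqr_ge0 (b + e). nra.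
Qed.

Lemma expiD (a b : R) : expi (a + b) = expi a * expi b.
Proof. rewrite /expi cosD sinD /=; congr Complex; ring. Qed.

Lemma expi0 : @expi R 0 = 1.
Proof. by rewrite /expi cos0 sin0. Qed.

Lemma lip_lt (f df : R -> R) (a b : R) : a < b -> (forall x : R, is_derive x (1:R) f (df x)) ->
  continuous f -> (forall x, `|df x| <= 1) -> `|f b - f a| <= `|b - a|.
Proof.
move=> ab hd hc hb.
have [c _ ->] := MVT ab (fun x _ => hd x) (continuous_subspaceT hc).
by rewrite normrM ler_piMl.
Qed.

Lemma lip (f df : R -> R) (a b : R) : (forall x : R, is_derive x (1:R) f (df x)) ->
  continuous f -> (forall x, `|df x| <= 1) -> `|f b - f a| <= `|b - a|.
Proof.
move=> hd hc hb; have [ab|ba|->] := ltgtP a b.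
- exact: lip_lt.
- by rewrite distrC [`|b - a|]distrC; apply: lip_lt.
- by rewrite !subrr.
Qed.

Lemma sq_le (u v : R) : `|u| <= `|v| -> u ^+ 2 <= v ^+ 2.
Proof.
by rewrite -(real_normK (num_real u)) -(real_normK (num_real v)) ler_sqr ?nnegrE.
Qed.

Lemma ns_expiB (a b : R) : ns (expi a - expi b) <= 2 * (a - b) ^+ 2.
Proof.
rewrite /expi /= nsE.
have h1 : (cos a - cos b) ^+ 2 <= (a - b) ^+ 2.
  apply: sq_le.
  apply: (@lip _ (fun x => - sin x)) => //; first exact: continuous_cos.
  by move=> x; rewrite normrN sin_max.
have h2 : (sin a - sin b) ^+ 2 <= (a - b) ^+ 2.
  apply: sq_le.
  apply: (@lip _ cos) => //; first exact: continuous_sin.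
  by move=> x; rewrite cos_max.
have -> : (- sin b)%R = - sin b by [].
lra.
Qed.
End Cx.
Section L2g.
Variables (R : realType) (X : Type).
Local Notation C := R[i].
Local Notation Xc := {classic X}.

Definition ninj (s : seq X) := forall i j, (i < size s)%N -> (j < size s)%N ->
                       forall x0, nth x0 s i = nth x0 s j -> i = j.

Lemma ninj_uniq (s : seq Xc) : ninj s <-> uniq s.
Proof.
case: s => [|x0 s]; first by split => // _ i j; rewrite ltn0.
split.
- move=> H; apply/(uniqP x0) => i j Hi Hj E; exact: (H i j Hi Hj x0 E).
- move/(uniqP x0) => H i j Hi Hj y.
  rewrite (set_nth_default x0 y Hi) (set_nth_default x0 y Hj); exact: H.
Qed.

Lemma sum_le_l2 (h : X -> C) (s : seq X) : ninj s ->
  ((\sum_(x <- s) ns (h x))%:E <= l2norm2 h)%E.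
Proof. by move=> Hs; apply: ereal_sup_ubound; exists s. Qed.

Lemma l2_fin (h : X -> C) : in_l2 h ->
  exists N : R, 0 <= N /\ l2norm2 h = N%:E.
Proof.
move=> Hh.
have H0 : (0%:E <= l2norm2 h)%E.
  have Hn : ninj ([::] : seq X) by move=> i j; rewrite ltn0.
  by have := sum_le_l2 h Hn; rewrite big_nil.
exists (fine (l2norm2 h)); split; first by rewrite fine_ge0.
by rewrite fineK // ge0_fin_numE.
Qed.

Lemma l2_mul (p f : X -> C) : (forall x, ns (p x) = 1) ->
  l2norm2 (fun x => p x * f x) = l2norm2 f.
Proof.
move=> Hp; rewrite /l2norm2; congr ereal_sup.
have -> : (fun s : seq X => (\sum_(x <- s) Normc.normc (p x * f x) ^+ 2)%:E) =
          (fun s : seq X => (\sum_(x <- s) Normc.normc (f x) ^+ 2)%:E) => //.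
apply: funext => s; congr (_%:E); apply: eq_bigr => x _.
by have := nsM (p x) (f x); rewrite Hp mul1r.
Qed.

Lemma l2_tail (h : X -> C) (e : R) : in_l2 h -> 0 < e ->
  exists s0 : seq Xc, forall s : seq Xc, ninj s ->
    \sum_(x <- s | x \notin s0) ns (h x) <= e.
Proof.
move=> Hh e0; have [N [N0 HN]] := l2_fin Hh.
have : ((N - e)%:E < l2norm2 h)%E by rewrite HN lte_fin ltrBlDr ltrDl.
case/ereal_sup_gt => _ [s1 Hs1 <-]; rewrite lte_fin => Hlt.
pose s0 : seq Xc := s1.
have Hs0 : ninj s0 := Hs1.
exists s0 => s Hs.
have Hu : uniq ([seq x <- s | x \notin s0] ++ s0).
  rewrite cat_uniq filter_uniq ?(ninj_uniq s).1 //= (ninj_uniq s0).1 // andbT.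
  apply/hasPn => x xs0; rewrite mem_filter xs0.
  by [].
have := sum_le_l2 h (proj2 (ninj_uniq _) Hu).
rewrite HN lee_fin big_cat /= big_filter => H.
have : \sum_(x <- s | x \notin s0) ns (h x) <= N - \sum_(x <- s0) ns (h x).
  by rewrite lerBrDr.
move=> H2; apply: (le_trans H2); lra.
Qed.

Lemma l2_diff (h p q : X -> C) (s0 : seq Xc) (c e N : R) :
  (forall x, ns (p x) <= 1) -> (forall x, ns (q x) <= 1) -> 0 <= c ->
  (forall x : Xc, x \in s0 -> ns (p x - q x) <= c) ->
  (forall s : seq Xc, ninj s -> \sum_(x <- s | x \notin s0) ns (h x) <= e) ->
  l2norm2 h = N%:E ->
  (l2norm2 (fun x => (p x * h x - q x * h x)%R) <= (c * N + 4 * e)%:E)%E.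
Proof.
move=> Hp Hq c0 Hc Ht HN.
apply/ereal_supP => _ [s Hs <-]; rewrite lee_fin.
have HsN : \sum_(x <- s) ns (h x) <= N.
  by rewrite -lee_fin -HN; apply: sum_le_l2.
rewrite (bigID (fun x : Xc => x \in s0)) /=.
apply: lerD.
- apply: (@le_trans _ _ (\sum_(x <- s | x \in s0) c * ns (h x))).
    apply: ler_sum => x xs0; rewrite -mulrBl; have := nsM (p x - q x) (h x).
    rewrite /ns => ->; apply: ler_wpM2r; first exact: ns_ge0.
    exact: Hc.
  rewrite -mulr_sumr; apply: ler_wpM2l => //.
  apply: (le_trans _ HsN); rewrite [X in _ <= X](bigID (fun x : Xc => x \in s0)) /=.
  by rewrite lerDl sumr_ge0 // => x _; apply: ns_ge0.
- apply: (@le_trans _ _ (\sum_(x <- s | x \notin s0) 4 * ns (h x))).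
    apply: ler_sum => x _; rewrite -mulrBl; have := nsM (p x - q x) (h x).
    rewrite /ns => ->; apply: ler_wpM2r; first exact: ns_ge0.
    have := nsB (p x) (q x); have := Hp x; have := Hq x. rewrite /ns. lra.
  by rewrite -mulr_sumr; apply: ler_wpM2l => //; apply: Ht.
Qed.

End L2g.
Section Depth.
Variables (T : Type) (E : T -> T -> Prop) (r : T) (par : T -> T).

Definition reach (u : T) := exists n, iter n par u = r.

Lemma reach_ex u : reach u -> exists n, `[< iter n par u = r >].
Proof. by case=> n Hn; exists n; apply/asboolP. Qed.

Definition depth (u : T) : nat :=
  match pselect (reach u) with
  | left pf => ex_minn (reach_ex pf)
  | right _ => 0
  end.

Hypothesis Hpar : is_parent_fun E r par.
Hypothesis Hroot : is_root E r.
Hypothesis Huniq : forall u v w, E v u -> E w u -> v = w.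
Hypothesis Hconn : forall u v, undir_conn E u v.

Lemma edge_par x y : E x y -> y <> r /\ par y = x.
Proof.
move=> Exy; have yr : y <> r by move=> yr; subst y; exact: (Hroot.1 x).
by split => //; apply: Huniq (Hpar yr) Exy.
Qed.

Lemma reach_edge x y : E x y -> (reach x <-> reach y).
Proof.
move=> /edge_par [yr pxy]; split.
- by case=> n Hn; exists n.+1; rewrite iterSr pxy.
- case=> [[|n]] /= Hn; first by [].
  by exists n; rewrite -pxy -iterSr.
Qed.

Lemma reach_all u : reach u.
Proof.
have : forall a b, undir_conn E a b -> (reach a <-> reach b).
  move=> a b; elim => [x|x y z Exy _ IH|x y z Eyx _ IH]; first by [].
  - by rewrite (reach_edge Exy).
  - by rewrite -(reach_edge Eyx).
by move=> H; apply/(H u r (Hconn u r)); exists 0%N.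
Qed.

Lemma depthS u : u <> r -> depth u = (depth (par u)).+1.
Proof.
move=> ur; rewrite /depth.
case: pselect => [pu|]; last by move=> /(_ (reach_all _)).
case: pselect => [pp|]; last by move=> /(_ (reach_all _)).
case: ex_minnP => m /asboolP Hm Hmin.
case: ex_minnP => k /asboolP Hk Hkmin.
case: m Hm Hmin => [|m] Hm Hmin; first by [].
apply/eqP; rewrite eqSS eqn_leq; apply/andP; split.
- have : (m.+1 <= k.+1)%N by apply: Hmin; apply/asboolP; rewrite iterSr.
  by [].
- by apply: Hkmin; apply/asboolP; rewrite -iterSr.
Qed.
End Depth.
Unset Implicit Arguments.
Set Strict Implicit.
Theorem mainTheorem12 (R : realType) (d : nat) (V : 'I_d -> Type)
    (E : forall j : 'I_d, V j -> V j -> Prop)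
    (root : forall j : 'I_d, V j) (par : forall j : 'I_d, V j -> V j)
    (lam : 'I_d -> prodV V -> R) :
  (0 < d)%N ->
  (forall j, is_rooted_directed_tree (E j) (root j)) ->
  (forall j, leafless (E j)) ->
  (forall j, countable_type (V j)) ->
  (forall j, is_parent_fun (E j) (root j) (par j)) ->
  (forall j v, 0 < lam j v) ->
  (forall j, bounded_on_l2 (multishift root par lam j)) ->
  commuting_tuple (multishift root par lam) ->
  strongly_circular (multishift root par lam).
Proof.
move=> d0 Htree Hleaf Hcnt Hpar Hlam Hbdd Hcomm.
pose n (k : 'I_d) (v : prodV V) : R := (depth (root k) (par k) (v k))%:R.
pose s (th : 'I_d -> R) (v : prodV V) : R := \sum_(k < d) th k * n k v.
have HdS : forall k (u : V k), u <> root k ->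
    depth (root k) (par k) u = (depth (root k) (par k) (par k u)).+1.
  move=> k u ur; have [[_ _ Hc Hu] Hr] := Htree k.
  exact: (depthS (Hpar k) Hr Hu Hc).
have key : forall th j x, x j <> root j -> s th x = th j + s th (par_j par j x).
  move=> th j x xr; rewrite /s (bigD1 j) //= [X in _ = _ + X](bigD1 j) //=.
  rewrite addrA; congr (_ + _).
    rewrite /n /par_j dfwithin HdS // -addn1 natrD; ring.
  apply: eq_bigr => k kj; rewrite /n /par_j dfwithout //.
  by rewrite eq_sym.
pose G (th : 'I_d -> R) (f : prodV V -> R[i]) := fun x => expi (- s th x) * f x.
pose Gi (th : 'I_d -> R) (f : prodV V -> R[i]) := fun x => expi (s th x) * f x.
exists G, Gi; split.
- move=> th; split.
  + split.
    * by move=> a f g _ _; apply: funext => x; rewrite /G mulrDr mulrCA.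
    * by move=> f Hf; rewrite /in_l2 /G /Gi !l2_mul // => x; rewrite ns_expi.
    * by move=> f Hf; rewrite /G l2_mul // => x; rewrite ns_expi.
    * by move=> f Hf; apply: funext => x; rewrite /G /Gi mulrA -expiD subrr expi0 mul1r.
    * by move=> f Hf; apply: funext => x; rewrite /G /Gi mulrA -expiD addNr expi0 mul1r.
  + move=> j f _; apply: funext => x; rewrite /multishift /G /Gi.
    case: ifP => [_|/asboolPn xr]; first by rewrite !mulr0.
    rewrite (key th j x xr) expiD -mulrA; congr (_ * _).
    by rewrite mulrCA; congr (_ * _); rewrite mulrA -expiD subrr expi0 mul1r.
- move=> h Hh th0 eps eps0.
  have [N [N0 HN]] := l2_fin Hh.
  have e0 : 0 < eps / 8 by rewrite divr_gt0.
  have [s0 Ht] := l2_tail Hh e0.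
  pose D : R := \sum_(x <- s0) \sum_(k < d) n k x + 1.
  have n0 : forall k x, 0 <= n k x by move=> k x; rewrite /n ler0n.
  have D1 : 1 <= D.
    by rewrite /D lerDr; apply: sumr_ge0 => x _; apply: sumr_ge0.
  have HD : forall x : {classic prodV V}, x \in s0 -> \sum_(k < d) n k x <= D.
    move=> x xs; rewrite /D (big_rem x xs) /= -addrA lerDl addr_ge0 //.
    by apply: sumr_ge0 => y _; apply: sumr_ge0.
  pose Q : R := D ^+ 2.
  have Q0 : 0 < Q by rewrite /Q exprn_gt0 // (lt_le_trans ltr01 D1).
  have N1 : 0 < N + 1 by lra.
  have NQ0 : 0 < 8 * Q * (N + 1) by apply: mulr_gt0 => //; apply: mulr_gt0.

  pose del : R := Num.min 1 (eps / (8 * Q * (N + 1))).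
  have del0 : 0 < del by rewrite lt_min ltr01 divr_gt0.
  have del1 : del <= 1 by rewrite ge_min lexx.
  have del2 : del * (8 * Q * (N + 1)) <= eps.
    by rewrite -ler_pdivlMr // ge_min lexx orbT.
  exists del; split => // th Hth.
  have HN' : forall x, ns (expi (- s th x)) <= 1 by move=> x; rewrite ns_expi.
  have HN0 : forall x, ns (expi (- s th0 x)) <= 1 by move=> x; rewrite ns_expi.
  have c0 : 0 <= 2 * (del * D) ^+ 2 by rewrite mulr_ge0 // sqr_ge0.
  have Hc : forall x : {classic prodV V}, x \in s0 ->
      ns (expi (- s th x) - expi (- s th0 x)) <= 2 * (del * D) ^+ 2.
    move=> x xs; apply: (le_trans (ns_expiB _ _)); rewrite ler_wpM2l //.
    apply: sq_le; rewrite [`|del * D|]ger0_norm ?mulr_ge0 ?(ltW del0) ?(le_trans ler01 D1) //.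
    have -> : - s th x - - s th0 x = \sum_(k < d) (th0 k - th k) * n k x.
      rewrite /s opprK addrC -sumrB; apply: eq_bigr => k _; by rewrite mulrBl.
    apply: (le_trans (ler_norm_sum _ _ _)).
    apply: (@le_trans _ _ (\sum_(k < d) del * n k x)).
      apply: ler_sum => k _; rewrite normrM [`|n k x|]ger0_norm //.
      by rewrite ler_wpM2r // distrC ltW.
    by rewrite -mulr_sumr ler_wpM2l ?(ltW del0) // HD.
  have := l2_diff HN' HN0 c0 Hc Ht HN.
  move=> Hle; apply: (le_lt_trans Hle); rewrite lte_fin.
  have h1 : 0 <= (1 - del) * (del * Q * N).
    apply: mulr_ge0; first lra.
    apply: mulr_ge0 => //; apply: mulr_ge0; lra.
  have h2 : 0 <= del * Q by apply: mulr_ge0; lra.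
  have -> : 2 * (del * D) ^+ 2 * N = 2 * (del * del * Q * N) by rewrite /Q; ring.
  lra.
- move=> h _; apply: funext => x; rewrite /G /s big1 ?oppr0 ?expi0 ?mul1r //.
  by move=> k _; rewrite mul0r.
- move=> th th' h _; apply: funext => x; rewrite /G /s.
  under eq_bigr do rewrite mulrDl.
  by rewrite big_split /= opprD expiD mulrA.
Qed.
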